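(* Let $D$ be the diamond graph with $V=\{1,2,3,4\}$, $E=\{\{1,2\},\{1,3\},\{2,3\},\{2,4\},\{3,4\}\}$, and let $\lambda=(\lambda_1,\bar\lambda_2+\beta,\bar\lambda_3+\beta,\lambda_4)$ with $\lambda_1,\bar\lambda_2,\bar\lambda_3,\lambda_4,\beta>0$ and $\lambda_1+\lambda_4=\bar\lambda_2+\bar\lambda_3=\frac12$. Let $\Phi_+$ be the edge-priority policy adapted to $D$ in which edges $\{1,2\}$ and $\{3,4\}$ have the highest priority. For every greedy policy $\Phi$ adapted to $D$, $\mu_{1,2}(\Phi)\le\mu_{1,2}(\Phi_+)$, $\mu_{3,4}(\Phi)\le\mu_{3,4}(\Phi_+)$, $\mu_{1,3}(\Phi)\ge\mu_{1,3}(\Phi_+)$ and $\mu_{2,4}(\Phi)\ge\mu_{2,4}(\Phi_+)$; equivalently, in kernel coordinates, $\alpha(\Phi)\le\alpha(\Phi_+)$.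
   Context: Matching model: classes arrive as independent Poisson processes of rates $\lambda_i$; classes $i,j$ matchable iff $\{i,j\}\in E$; unmatched items wait. A policy adapted to $D$: countable state space with queue-size map and unique empty state, probabilities of matching an arriving class-$i$ item with a waiting neighbour class $j$ or letting it wait, new state consistent with queue sizes, irreducible state chain. Greedy: no arriving item is left unmatched while a compatible item is waiting (every greedy policy is stable for this $\lambda$). $\mu_{i,j}(\Phi)=(\sum_l\lambda_l)\lim_tM_{t,\{i,j\}}/t$ a.s. is the matching rate between classes $i$ and $j$ in $(D,\lambda,\Phi)$, $M_{t,\{i,j\}}$ being the number of such matches among the first $t$ arrivals. Every solution of the conservation equation $\sum_{k\ni i}\mu_k=\lambda_i$ ($i\in V$) has the form $(\mu_{1,2},\mu_{1,3},\mu_{2,3},\mu_{2,4},\mu_{3,4})=(2\lambda_1\bar\lambda_2+\alpha,2\lambda_1\bar\lambda_3-\alpha,\beta,2\bar\lambda_2\lambda_4-\alpha,2\bar\lambda_3\lambda_4+\alpha)$ for a unique $\alpha$, its kernel coordinate; $\alpha(\Phi)$ denotes that of $\mu(\Phi)$. An edge-priority policy is the deterministic size-based greedy policy given by a strict order on edges: an arriving class-$i$ item is matched with the waiting neighbour class $j$ whose edge $\{i,j\}$ has the highest priority, and waits if no neighbour class has waiting items; for $\Phi_+$, edges $\{1,2\}$ and $\{3,4\}$ precede all others. *)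

(* Defs.v *)
From HB Require Import structures.
From mathcomp Require Import all_boot all_order all_algebra.
From mathcomp Require Import all_classical all_reals all_analysis.
From Stdlib Require Import Relations.
Set Implicit Arguments. Unset Strict Implicit. Unset Printing Implicit Defensive.
Import Order.TTheory GRing.Theory Num.Theory.
Import numFieldNormedType.Exports.
Local Open Scope classical_set_scope.
Local Open Scope ring_scope.

(* Classes 1,2,3,4 of the paper are encoded as 0,1,2,3 : 'I_4. *)

Definition diamond_edge1 (i j : nat) : bool :=
  [|| (i == 0) && (j == 1), (i == 0) && (j == 2), (i == 1) && (j == 2),
      (i == 1) && (j == 3) | (i == 2) && (j == 3)]%N.
Definition edgeD (i j : 'I_4) : bool :=
  diamond_edge1 i j || diamond_edge1 j i.

Definition lam (R : realType) (l1 l2b l3b l4 b : R) (i : 'I_4) : R :=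
  match val i with
  | 0 => l1 | 1 => l2b + b | 2 => l3b + b | _ => l4
  end.

Definition arr_prob (R : realType) (la : 'I_4 -> R) (i : 'I_4) : R :=
  la i / \sum_(k < 4) la k.

(* A policy: countable state space, queue-size map, empty state,
   probabilities of the action taken by an arriving class-i item
   (None = wait, Some j = match with a waiting class-j item), and the
   resulting new state. *)
Record policy (R : realType) := Policy {
  pS : countType;
  pq : pS -> 'I_4 -> nat;
  ps0 : pS;
  pp : pS -> 'I_4 -> option 'I_4 -> R;
  pnext : pS -> 'I_4 -> option 'I_4 -> pS
}.

Definition pstep (R : realType) (P : policy R) (s s' : pS P) : Prop :=
  exists (i : 'I_4) (a : option 'I_4), 0 < pp s i a /\ pnext s i a = s'.

Definition adapted (R : realType) (P : policy R) : Prop :=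
  (forall s, (forall i, pq s i = 0%N) <-> s = ps0 P) /\
  [/\ (forall (s : pS P) i a, 0 <= pp s i a),
      (forall (s : pS P) i, \sum_(a : option 'I_4) pp s i a = 1),
      (forall (s : pS P) i j, 0 < pp s i (Some j) ->
          [/\ edgeD i j, (0 < pq s j)%N &
              forall k, pq (pnext s i (Some j)) k =
                        (if k == j then (pq s k).-1 else pq s k)]),
      (forall (s : pS P) i, 0 < pp s i None ->
          forall k, pq (pnext s i None) k =
                    (if k == i then (pq s k).+1 else pq s k)) &
      (forall s s', clos_refl_trans _ (@pstep R P) s s')].

Definition greedy (R : realType) (P : policy R) : Prop :=
  forall (s : pS P) i, (exists j, edgeD i j && (0 < pq s j)%N) -> pp s i None = 0.

(* Strict order on edges given by a rank (smaller rank = higher priority). *)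
Definition edge_order (rk : 'I_4 -> 'I_4 -> nat) : Prop :=
  (forall i j, rk i j = rk j i) /\
  (forall i j k l, edgeD i j -> edgeD k l -> rk i j = rk k l ->
      ((i == k) && (j == l)) || ((i == l) && (j == k))).

Definition plus_order (rk : 'I_4 -> 'I_4 -> nat) : Prop :=
  edge_order rk /\
  forall i j, edgeD i j ->
    ~~ ((i == 0 :> nat) && (j == 1 :> nat) || (i == 1 :> nat) && (j == 0 :> nat)) ->
    ~~ ((i == 2 :> nat) && (j == 3 :> nat) || (i == 3 :> nat) && (j == 2 :> nat)) ->
    (rk (inord 0) (inord 1) < rk i j)%N /\ (rk (inord 2) (inord 3) < rk i j)%N.

Definition edge_priority (R : realType) (rk : 'I_4 -> 'I_4 -> nat)
    (P : policy R) : Prop :=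
  injective (@pq R P) /\
  (forall (s : pS P) i j, edgeD i j -> (0 < pq s j)%N ->
     (forall k, edgeD i k -> (0 < pq s k)%N -> k != j -> (rk i j < rk i k)%N) ->
     pp s i (Some j) = 1) /\
  (forall (s : pS P) i, (forall j, edgeD i j -> pq s j = 0%N) -> pp s i None = 1).

Fixpoint state_after (R : realType) (P : policy R)
    (a : nat -> 'I_4) (c : nat -> option 'I_4) (t : nat) : pS P :=
  match t with
  | 0 => ps0 P
  | t'.+1 => pnext (state_after P a c t') (a t') (c t')
  end.

(* (A, C) is a realization, on the probability space (Omega, Pr), of the
   matching model (D, la, P): A k = class of the (k+1)-th arrival,
   C k = action taken for it. *)
Definition realizes (R : realType) (la : 'I_4 -> R) (P : policy R)
    (d : measure_display) (Omega : measurableType d)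
    (Pr : probability Omega R)
    (A : nat -> Omega -> 'I_4) (C : nat -> Omega -> option 'I_4) : Prop :=
  [/\ (forall k i, measurable [set w | A k w = i]),
      (forall k c, measurable [set w | C k w = c]) &
      (forall t (a : nat -> 'I_4) (c : nat -> option 'I_4),
         Pr [set w | forall k, (k < t)%N -> A k w = a k /\ C k w = c k] =
         (\prod_(k < t) (arr_prob la (a k) *
                         pp (state_after P a c k) (a k) (c k)))%:E)].

Definition nmatch (Omega : Type)
    (A : nat -> Omega -> 'I_4) (C : nat -> Omega -> option 'I_4)
    (i j : 'I_4) (t : nat) (w : Omega) : nat :=
  (\sum_(k < t)
     (((A k w == i) && (C k w == Some j)) || ((A k w == j) && (C k w == Some i))
      : nat))%N.

Definition matching_rate (R : realType) (la : 'I_4 -> R)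
    (d : measure_display) (Omega : measurableType d)
    (Pr : probability Omega R)
    (A : nat -> Omega -> 'I_4) (C : nat -> Omega -> option 'I_4)
    (i j : 'I_4) (m : R) : Prop :=
  {ae Pr, forall w,
     (fun t : nat => (\sum_(l < 4) la l) * (nmatch A C i j t w)%:R / t%:R)
       @ \oo --> m}.

(* Main.v *)
Require Import Defs.
From HB Require Import structures.
From mathcomp Require Import all_boot all_order all_algebra.
From mathcomp Require Import all_classical all_reals all_analysis.
From mathcomp Require Import lra.
From Stdlib Require Import Lia.
From mathcomp Require Import zify.
Import Order.TTheory GRing.Theory Num.Theory.
Import numFieldNormedType.Exports.
Set Implicit Arguments. Unset Strict Implicit. Unset Printing Implicit Defensive.
Local Open Scope classical_set_scope.
Local Open Scope ring_scope.
Section Lim.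
Variable R : realType.

Lemma eventually_big d (O : measurableType d) (P : probability O R)
  (f : nat -> O -> R) (m x : R) :
  (forall t, measurable [set w | x < f t w]) -> x < m ->
  {ae P, forall w, f ^~ w @ \oo --> m} ->
  exists T : nat, ((2^-1)%:E < P (\bigcap_(t in [set t | (T <= t)%N]) [set w | (x < f t w)%R]))%E.
Proof.
move=> mf xm [N [mN PN0 cN]].
set B := fun T : nat => \bigcap_(t in [set t | (T <= t)%N]) [set w | x < f t w].
have mB : forall T, measurable (B T).
  move=> T; rewrite /B; apply: bigcap_measurableType => t _; exact: mf.
have ndB : nondecreasing_seq B.
  move=> T T' TT'; apply/subsetPset => w /= Hw t /= Ht; apply: Hw => /=; exact: leq_trans Ht.
have mU : measurable (\bigcup_n B n) by exact: bigcup_measurable.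
have cv := nondecreasing_cvg_mu (mu:=P) mB mU ndB.
have U1 : P (\bigcup_n B n) = 1%E.
  apply/eqP; rewrite eq_le probability_le1 //=.
  have -> : (1 = P (~` N))%E by rewrite probability_setC // PN0 sube0.
  apply: le_measure; rewrite ?inE //; first exact: measurableC.
  move=> w /= nNw.
  have cw : f ^~ w @ \oo --> m.
    apply: contra_notP nNw => H; apply: cN => /=; exact: H.
  have := cvgr_gt _ cw _ xm => -[T _ HT].
  by exists T => // t /= Tt; apply: HT.
have h12 : ((2^-1)%:E < P (\bigcup_n B n))%E by rewrite U1 lte_fin; lra.
have := cv _ (open_ereal_gt' h12) => -[T _ HT].
by exists T; apply: (HT T) => /=.
Qed.

End Lim.
Section Lim2.
Variable R : realType.

Lemma dom_limit d1 (O1 : measurableType d1) (P1 : probability O1 R)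
  d2 (O2 : measurableType d2) (P2 : probability O2 R)
  (f1 : nat -> O1 -> R) (f2 : nat -> O2 -> R) (m1 m2 : R) :
  (forall t x, measurable [set w | x < f1 t w]) ->
  (forall t x, measurable [set w | x < f2 t w]) ->
  (forall t x, measurable [set w | f2 t w < x]) ->
  (forall t (x : R), (P1 [set w | (x < f1 t w)%R] <= P2 [set w | (x < f2 t w)%R])%E) ->
  {ae P1, forall w, f1 ^~ w @ \oo --> m1} ->
  {ae P2, forall w, f2 ^~ w @ \oo --> m2} -> m1 <= m2.
Proof.
move=> mf1 mf2 mf2' dom H1 H2; rewrite leNgt; apply/negP => m21.
set x := (m1 + m2) / 2.
have xm1 : x < m1 by rewrite /x; lra.
have xm2 : - x < - m2 by rewrite /x; lra.
have [T1 HT1] := eventually_big (fun t => mf1 t x) xm1 H1.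
have mg : forall t, measurable [set w | - x < - f2 t w].
  move=> t; have -> : [set w | - x < - f2 t w] = [set w | f2 t w < x].
    by apply/seteqP; split => w /=; rewrite ltrN2.
  exact: mf2'.
have H2' : {ae P2, forall w, (fun t => - f2 t w) @ \oo --> - m2}.
  by apply: filterS H2 => w /= cw; apply: cvgN.
have [T2 HT2] := eventually_big mg xm2 H2'.
set T := maxn T1 T2.
have e1 : ((2^-1)%:E < P2 [set w | (x < f2 T w)%R])%E.
  apply: (lt_le_trans HT1); apply: le_trans (dom T x).
  apply: le_measure; rewrite ?inE //.
  - by apply: bigcap_measurableType => t _; exact: mf1.
  - by move=> w /= Hw; apply: Hw; rewrite /= leq_maxl.
have e2 : ((2^-1)%:E < P2 [set w | (f2 T w < x)%R])%E.
  apply: (lt_le_trans HT2).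
  apply: le_measure; rewrite ?inE //.
  - by apply: bigcap_measurableType => t _; exact: mg.
  - by move=> w /= Hw; have := Hw T; rewrite /= leq_maxr ltrN2; apply.
have : (P2 [set w | (x < f2 T w)%R] + P2 [set w | (f2 T w < x)%R] <= 1)%E.
  rewrite -measureU //; first by apply: probability_le1; apply: measurableU.
  by apply/seteqP; split => // w /= [h1 h2]; move: (lt_trans h1 h2); rewrite ltxx.
apply/negP; rewrite -ltNge.
have -> : (1 = (2^-1)%:E + (2^-1)%:E :> \bar R)%E by rewrite -EFinD; congr (_%:E); lra.
exact: lteD.
Qed.

End Lim2.
Section Core.

Definition nedge (i j : nat) : bool := diamond_edge1 i j || diamond_edge1 j i.

Definition gst (v : nat -> nat) (i : nat) (o : option nat) (v' : nat -> nat) : Prop :=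
  match o with
  | Some j => [/\ nedge i j, (0 < v j)%N &
               forall l, (l < 4)%N -> v' l = if l == j then (v l).-1 else v l]
  | None => (forall j, (j < 4)%N -> nedge i j -> v j = 0%N) /\
            forall l, (l < 4)%N -> v' l = if l == i then (v l).+1 else v l
  end.

Definition pst (v : nat -> nat) (i : nat) (o : option nat) (v' : nat -> nat) : Prop :=
  [/\ gst v i o v', (i = 1%N -> o = Some 3%N -> v 0%N = 0%N) &
      (i = 2%N -> o = Some 0%N -> v 3%N = 0%N)].

Definition ind (ak : nat) (ck : option nat) (i j : nat) : nat :=
  (((ak == i) && (ck == Some j)) || ((ak == j) && (ck == Some i))).

Variables (a : nat -> nat) (c1 c2 : nat -> option nat) (v1 v2 : nat -> nat -> nat).

Definition Mc (c : nat -> option nat) i j t : nat := (\sum_(k < t) ind (a k) (c k) i j)%N.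

Lemma McS c i j t : Mc c i j t.+1 = (Mc c i j t + ind (a t) (c t) i j)%N.
Proof. by rewrite /Mc big_ord_recr. Qed.

Definition Inv t : Prop :=
  let x l := v1 t l in let y l := v2 t l in
  x 1%N = y 1%N /\ x 2%N = y 2%N /\
      (x 0%N + Mc c1 0 1 t + Mc c1 0 2 t = y 0%N + Mc c2 0 1 t + Mc c2 0 2 t)%N /\
      (x 3%N + Mc c1 1 3 t + Mc c1 2 3 t = y 3%N + Mc c2 1 3 t + Mc c2 2 3 t)%N /\
      (Mc c1 0 1 t + Mc c1 1 3 t = Mc c2 0 1 t + Mc c2 1 3 t)%N /\
      (Mc c1 0 2 t + Mc c1 2 3 t = Mc c2 0 2 t + Mc c2 2 3 t)%N /\
      (Mc c1 0 1 t <= Mc c2 0 1 t)%N /\ (Mc c2 0 2 t <= Mc c1 0 2 t)%N /\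
      ((x 1%N = 0 \/ x 2%N = 0) /\ ((x 0%N = 0 /\ x 3%N = 0) \/ (x 1%N = 0 /\ x 2%N = 0)))%N /\
      ((y 1%N = 0 \/ y 2%N = 0) /\ ((y 0%N = 0 /\ y 3%N = 0) \/ (y 1%N = 0 /\ y 2%N = 0)))%N.

Lemma Inv0 : (forall l, (l < 4)%N -> v1 0 l = 0%N) -> (forall l, (l < 4)%N -> v2 0 l = 0%N) -> Inv 0.
Proof.
move=> h1 h2; rewrite /Inv /Mc !big_ord0 !h1 ?h2 //; lia.
Qed.

Ltac spec4 F := have := F 0%N isT; have := F 1%N isT; have := F 2%N isT; have := F 3%N isT; clear F.
Ltac specg G := (try have := G 0%N isT erefl); (try have := G 1%N isT erefl);
   (try have := G 2%N isT erefl); (try have := G 3%N isT erefl); clear G.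

Ltac destr_g H := match type of H with
 | [/\ _, _ & _] => let e := fresh in let p := fresh in let F := fresh in case: H => e p F; spec4 F
 | _ /\ _ => let G := fresh in let F := fresh in case: H => G F; specg G; spec4 F
end.

Lemma Inv_step t : (a t < 4)%N -> gst (v1 t) (a t) (c1 t) (v1 t.+1) ->
  pst (v2 t) (a t) (c2 t) (v2 t.+1) -> Inv t -> Inv t.+1.
Proof.
rewrite /Inv !McS.
move: (v1 t) (v2 t) (v1 t.+1) (v2 t.+1) => x y x' y'.
move: (Mc c1 0 1 t) (Mc c1 0 2 t) (Mc c1 1 3 t) (Mc c1 2 3 t) => p01 p02 p13 p23.
move: (Mc c2 0 1 t) (Mc c2 0 2 t) (Mc c2 1 3 t) (Mc c2 2 3 t) => q01 q02 q13 q23.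
case: (a t) => [|[|[|[|//]]]] _;
case: (c1 t) => [[|[|[|[|j1]]]]|];
case: (c2 t) => [[|[|[|[|j2]]]]|];
rewrite /pst /gst /ind /nedge /=;
try (by move=> [] /=); try (by move=> _ [[] /=]);
move=> H1 [H2 P1 P2] I;
(try have := P1 erefl erefl); (try have := P2 erefl erefl); clear P1 P2;
destr_g H1; destr_g H2; cbv zeta in *; simpl in *; lia.
Qed.

Lemma core T : (forall k, (k < T)%N -> (a k < 4)%N) ->
  (forall l, (l < 4)%N -> v1 0 l = 0%N) -> (forall l, (l < 4)%N -> v2 0 l = 0%N) ->
  (forall k, (k < T)%N -> gst (v1 k) (a k) (c1 k) (v1 k.+1)) ->
  (forall k, (k < T)%N -> pst (v2 k) (a k) (c2 k) (v2 k.+1)) ->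
  [/\ (Mc c1 0 1 T <= Mc c2 0 1 T)%N, (Mc c1 2 3 T <= Mc c2 2 3 T)%N,
      (Mc c2 0 2 T <= Mc c1 0 2 T)%N & (Mc c2 1 3 T <= Mc c1 1 3 T)%N].
Proof.
move=> ha h1 h2 g p.
have : forall t, (t <= T)%N -> Inv t.
  elim=> [_|t IH tT]; first exact: Inv0.
  apply: Inv_step; [exact: ha|exact: g|exact: p|exact: IH (ltnW tT)].
move=> /(_ T (leqnn T)); rewrite /Inv; cbv zeta => H; split; lia.
Qed.

End Core.
Section Decomp.
Variable R : realType.

Lemma disj_big (O : Type) (I : eqType) (F : I -> set O) (i : I) (s : seq I) :
  (forall i j, i != j -> F i `&` F j = set0) -> i \notin s ->
  F i `&` \big[setU/set0]_(j <- s) F j = set0.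
Proof.
move=> dis; elim: s => [|j s IH]; first by rewrite big_nil setI0.
rewrite in_cons negb_or => /andP [ij nis]; rewrite big_cons setIUr IH // dis //.
by rewrite setU0.
Qed.

Lemma measure_big_seq d (O : measurableType d) (P : probability O R)
   (I : eqType) (s : seq I) (F : I -> set O) :
  uniq s -> (forall i, measurable (F i)) ->
  (forall i j, i != j -> F i `&` F j = set0) ->
  P (\big[setU/set0]_(i <- s) F i) = (\sum_(i <- s) P (F i))%E.
Proof.
move=> us mF dis; elim: s us => [|i s IH] /=; first by rewrite !big_nil measure0.
move=> /andP [nis us]; rewrite !big_cons.
have mb : measurable (\big[setU/set0]_(j <- s) F j) by apply: bigsetU_measurable => j _.
rewrite (measureU P (mF i) mb (disj_big dis nis)); congr (_ + _)%E; exact: IH.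
Qed.

Definition extf (T : Type) t (f : {ffun 'I_t -> T}) (dd : T) (k : nat) : T :=
  match (insub k : option 'I_t) with Some k' => f k' | None => dd end.

Lemma extfE (T : Type) t (f : {ffun 'I_t -> T}) dd (k : 'I_t) : extf f dd k = f k.
Proof. by rewrite /extf; case: insubP => [k' _ /val_inj -> //|]; rewrite ltn_ord. Qed.

Lemma extfO (T : Type) t (f : {ffun 'I_t -> T}) dd (k : nat) (kt : (k < t)%N) :
  extf f dd k = f (Ordinal kt).
Proof. exact: (extfE f dd (Ordinal kt)). Qed.

Lemma extfN (T : Type) t (f : {ffun 'I_t -> T}) dd (k : nat) : (t <= k)%N -> extf f dd k = dd.
Proof. by move=> tk; rewrite /extf; case: insubP => // k' /=; rewrite ltnNge tk. Qed.

Definition XT t := ({ffun 'I_t -> 'I_4} * {ffun 'I_t -> option 'I_4})%type.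

Definition ppprod (P : policy R) t (ea : nat -> 'I_4) (c : {ffun 'I_t -> option 'I_4}) : R :=
  \prod_(k < t) pp (state_after P ea (extf c None) k) (ea k) (extf c None k).

Definition arrprod (la : 'I_4 -> R) t (a : {ffun 'I_t -> 'I_4}) : R :=
  \prod_(k < t) arr_prob la (extf a ord0 k).

Definition wgt (la : 'I_4 -> R) (P : policy R) t (x : XT t) : R :=
  \prod_(k < t) (arr_prob la (extf x.1 ord0 k) *
    pp (state_after P (extf x.1 ord0) (extf x.2 None) k) (extf x.1 ord0 k) (extf x.2 None k)).

Lemma wgtE la P t (x : XT t) : wgt la P x = arrprod la x.1 * ppprod P (extf x.1 ord0) x.2.
Proof. by rewrite /wgt big_split. Qed.

Variables (la : 'I_4 -> R) (P : policy R) (d : measure_display) (Om : measurableType d)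
  (Pr : probability Om R) (A : nat -> Om -> 'I_4) (C : nat -> Om -> option 'I_4).
Hypothesis hreal : realizes la P Pr A C.

Definition cyl t (x : XT t) : set Om :=
  [set w | forall k, (k < t)%N -> A k w = extf x.1 ord0 k /\ C k w = extf x.2 None k].

Definition xof t (w : Om) : XT t := ([ffun k : 'I_t => A k w], [ffun k : 'I_t => C k w]).

Lemma cyl_xof t w : cyl (xof t w) w.
Proof. by move=> k kt; rewrite /xof /= -[k]/(val (Ordinal kt)) !extfE !ffunE. Qed.

Lemma cyl_eq t (x : XT t) w : cyl x w -> x = xof t w.
Proof.
move=> H; case: x H => a c H; congr pair; apply/ffunP => k; rewrite ffunE;
  have [h1 h2] := H k (ltn_ord k); by rewrite ?h1 ?h2 extfE.
Qed.

Lemma mcyl t (x : XT t) : measurable (cyl x).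
Proof.
have -> : cyl x = \bigcap_(k in [set k | (k < t)%N])
   ([set w | A k w = extf x.1 ord0 k] `&` [set w | C k w = extf x.2 None k]).
  by apply/seteqP; split => w /= H k /= kt; have := H k kt.
apply: bigcap_measurableType => k _; apply: measurableI.
- by case: hreal => h _ _; apply: h.
- by case: hreal => _ h _; apply: h.
Qed.

Lemma Pr_cyl t (x : XT t) : Pr (cyl x) = (wgt la P x)%:E.
Proof. by case: hreal => _ _ h; rewrite /cyl h. Qed.

Lemma pred_union t (Q : pred (XT t)) :
  [set w | Q (xof t w)] = \big[setU/set0]_(x <- [seq x <- index_enum (XT t) | Q x]) cyl x.
Proof.
  apply/seteqP; split => w /=.
  - move=> Qw; rewrite -bigcup_seq; exists (xof t w) => //=.
      by rewrite mem_filter Qw mem_index_enum.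
    exact: cyl_xof.
  - rewrite -bigcup_seq => -[x /=]; rewrite mem_filter => /andP [Qx _] /cyl_eq <-.
    exact: Qx.
Qed.

Lemma m_pred t (Q : pred (XT t)) : measurable [set w | Q (xof t w)].
Proof. by rewrite pred_union; apply: bigsetU_measurable => x _; exact: mcyl. Qed.

Lemma Pr_pred t (Q : pred (XT t)) :
  Pr [set w | Q (xof t w)] = (\sum_(x | Q x) wgt la P x)%:E.
Proof.
have -> : [set w | Q (xof t w)] = \big[setU/set0]_(x <- [seq x <- index_enum (XT t) | Q x]) cyl x.
  apply/seteqP; split => w /=.
  - move=> Qw; rewrite -bigcup_seq; exists (xof t w) => //=.
      by rewrite mem_filter Qw mem_index_enum.
    exact: cyl_xof.
  - rewrite -bigcup_seq => -[x /=]; rewrite mem_filter => /andP [Qx _] /cyl_eq <-.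
    exact: Qx.
rewrite measure_big_seq //.
- by rewrite -sumEFin big_filter; apply: eq_bigr => x _; rewrite Pr_cyl.
- by rewrite filter_uniq // index_enum_uniq.
- exact: mcyl.
- move=> x y xy; apply/seteqP; split => // w /= [/cyl_eq h1 /cyl_eq h2].
  by move: xy; rewrite h1 h2 eqxx.
Qed.

End Decomp.
Section Norm.
Variable R : realType.

Lemma state_after_eq (P : policy R) a c a' c' k :
  (forall j, (j < k)%N -> a j = a' j /\ c j = c' j) ->
  state_after P a c k = state_after P a' c' k.
Proof.
elim: k => [//|k IH] H /=.
have [h1 h2] := H k (ltnSn k).
rewrite h1 h2 IH // => j jk; apply: H; exact: ltnW.
Qed.

Definition hext (T : Type) t (p : {ffun 'I_t -> T} * T) : {ffun 'I_t.+1 -> T} :=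
  [ffun k : 'I_t.+1 => extf p.1 p.2 k].

Lemma hext_bij (T : Type) t : bijective (@hext T t).
Proof.
exists (fun f : {ffun 'I_t.+1 -> T} => ([ffun k : 'I_t => f (widen_ord (leqnSn t) k)], f ord_max)).
- move=> [g o]; rewrite /hext /=; congr pair.
    by apply/ffunP => k; rewrite !ffunE /= -[val k]/(val (widen_ord (leqnSn t) k)) -[X in extf _ _ X]/(val k) extfE.
  by rewrite ffunE extfN.
- move=> f; apply/ffunP => k; rewrite !ffunE /=.
  have [kt|tk] := ltnP k t.
    by rewrite -[val k]/(val (Ordinal kt)) extfE ffunE; congr (f _); apply: val_inj.
  rewrite extfN //; congr (f _); apply: val_inj => /=.
  by apply/eqP; rewrite eqn_leq tk -ltnS ltn_ord.
Qed.

Lemma extf_hext (T : Type) t (p : {ffun 'I_t -> T} * T) dd k : (k < t)%N ->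
  extf (hext p) dd k = extf p.1 dd k.
Proof.
move=> kt; have kt1 : (k < t.+1)%N by exact: ltnW.
by rewrite (extfO _ _ kt1) ffunE /= (extfO _ _ kt) (extfO _ _ kt).
Qed.

Lemma extf_hext_t (T : Type) t (p : {ffun 'I_t -> T} * T) dd :
  extf (hext p) dd t = p.2.
Proof.
by rewrite -[t]/(val (@ord_max t)) extfE ffunE /= extfN.
Qed.

Lemma sum_pp (P : policy R) (hsum : forall (s : pS P) i, \sum_(o : option 'I_4) pp s i o = 1)
  t (ea : nat -> 'I_4) :
  \sum_(c : {ffun 'I_t -> option 'I_4}) ppprod P ea c = 1.
Proof.
elim: t => [|t IH].
  rewrite /ppprod; under eq_bigr do rewrite big_ord0.
  by rewrite sumr_const card_ffun card_ord expn0 /= mulr1n.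
rewrite (reindex (@hext _ t)); last by apply: onW_bij; exact: hext_bij.
rewrite -(pair_bigA _ (fun c o => ppprod P ea (hext (c, o)))) /=.
rewrite -[RHS]IH; apply: eq_bigr => c _.
have E : forall o, ppprod P ea (hext (c, o)) =
    ppprod P ea c * pp (state_after P ea (extf c None) t) (ea t) o.
  move=> o; rewrite /ppprod big_ord_recr /=; congr (_ * _).
    apply: eq_bigr => k _ /=; rewrite extf_hext //=; congr (pp _ _ _).
    apply: state_after_eq => j jk; split => //; rewrite extf_hext //.
    exact: ltn_trans jk (ltn_ord k).
  rewrite extf_hext_t /=; congr (pp _ _ _).
  by apply: state_after_eq => j jk; split => //; rewrite extf_hext.
under eq_bigr do rewrite E.
by rewrite -mulr_sumr hsum mulr1.
Qed.

Lemma prod_pos_each (I : finType) (F : I -> R) :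
  (forall i, 0 <= F i) -> 0 < \prod_i F i -> forall i, 0 < F i.
Proof.
move=> F0 Hp i; rewrite lt_def F0 andbT; apply/negP => /eqP Fi.
by move: Hp; rewrite (bigD1 i) //= Fi mul0r ltxx.
Qed.

Lemma per_a (T : finType) (p1 p2 : T -> R) (n1 n2 : T -> nat) (Q : pred nat) :
  (forall c, 0 <= p1 c) -> (forall c, 0 <= p2 c) ->
  \sum_c p1 c = 1 -> \sum_c p2 c = 1 ->
  (forall c1 c2, 0 < p1 c1 -> 0 < p2 c2 -> (n1 c1 <= n2 c2)%N) ->
  (forall m n, (m <= n)%N -> Q m -> Q n) ->
  \sum_(c | Q (n1 c)) p1 c <= \sum_(c | Q (n2 c)) p2 c.
Proof.
move=> p10 p20 s1 s2 H Qm.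
have [[c1 /andP [Qc1 pc1]] | no] := pselect (exists c, Q (n1 c) && (0 < p1 c)).
  have -> : \sum_(c | Q (n2 c)) p2 c = 1.
    rewrite -s2 [RHS](bigID (fun c => Q (n2 c))) /= [X in _ = _ + X]big1 ?addr0 // => c nQ.
    apply/eqP; rewrite eq_le p20 andbT leNgt; apply/negP => pc.
    by move: nQ; rewrite (Qm _ _ (H _ _ pc1 pc) Qc1).
  rewrite -s1 [X in _ <= X](bigID (fun c => Q (n1 c))) /= lerDl.
  by apply: sumr_ge0 => c _.
rewrite big1; first by apply: sumr_ge0 => c _.
move=> c Qc; apply/eqP; rewrite eq_le p10 andbT leNgt; apply/negP => pc.
by apply: no; exists c; rewrite Qc pc.
Qed.

End Norm.
Section Cmp.
Variable R : realType.

Lemma cmp_sum (la : 'I_4 -> R) (P1 P2 : policy R)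
  (hs1 : forall (s : pS P1) i, \sum_(o : option 'I_4) pp s i o = 1)
  (hs2 : forall (s : pS P2) i, \sum_(o : option 'I_4) pp s i o = 1)
  (hp1 : forall (s : pS P1) i o, 0 <= pp s i o)
  (hp2 : forall (s : pS P2) i o, 0 <= pp s i o)
  (hla : forall i, 0 <= arr_prob la i)
  t (n1 n2 : XT t -> nat) (Q : pred nat)
  (Qm : forall m n, (m <= n)%N -> Q m -> Q n)
  (path : forall (a : {ffun 'I_t -> 'I_4}) c1 c2,
     0 < ppprod P1 (extf a ord0) c1 -> 0 < ppprod P2 (extf a ord0) c2 ->
     (n1 (a, c1) <= n2 (a, c2))%N) :
  \sum_(x | Q (n1 x)) wgt la P1 x <= \sum_(x | Q (n2 x)) wgt la P2 x.
Proof.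
have E1 : forall (P : policy R) (n : XT t -> nat), \sum_(x | Q (n x)) wgt la P x =
    \sum_(a : {ffun 'I_t -> 'I_4}) \sum_(c : {ffun 'I_t -> option 'I_4} | Q (n (a, c))) wgt la P (a, c).
  by move=> P n; rewrite pair_big_dep; apply: eq_big => -[a c].
rewrite !E1.
apply: ler_sum => a _.
under eq_bigr do rewrite wgtE /=.
under [X in _ <= X]eq_bigr do rewrite wgtE /=.
rewrite -!mulr_sumr; apply: ler_wpM2l.
  by apply: prodr_ge0 => k _; exact: hla.
apply: (per_a (n1 := fun c => n1 (a, c)) (n2 := fun c => n2 (a, c))) => //.
- by move=> c; apply: prodr_ge0 => k _; exact: hp1.
- by move=> c; apply: prodr_ge0 => k _; exact: hp2.
- exact: sum_pp.
- exact: sum_pp.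
- by move=> c1 c2; apply: path.
Qed.

End Cmp.
Section Bridge.
Variable R : realType.

Definition o0 : 'I_4 := @Ordinal 4 0 isT.
Definition o1 : 'I_4 := @Ordinal 4 1 isT.
Definition o2 : 'I_4 := @Ordinal 4 2 isT.
Definition o3 : 'I_4 := @Ordinal 4 3 isT.

Lemma inordE0 : inord 0 = o0. Proof. by apply: val_inj; rewrite /= inordK. Qed.
Lemma inordE1 : inord 1 = o1. Proof. by apply: val_inj; rewrite /= inordK. Qed.
Lemma inordE2 : inord 2 = o2. Proof. by apply: val_inj; rewrite /= inordK. Qed.
Lemma inordE3 : inord 3 = o3. Proof. by apply: val_inj; rewrite /= inordK. Qed.

Lemma edge_irr (i : 'I_4) : edgeD i i = false.
Proof. by case: i => [[|[|[|[|]]]] ?]. Qed.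

Lemma only_one (T : finType) (f : T -> R) (o0 o : T) :
  (forall o, 0 <= f o) -> \sum_o f o = 1 -> f o0 = 1 -> 0 < f o -> o = o0.
Proof.
move=> f0 s1 fo0 fo; apply/eqP; apply/negP => /negP ne.
have : \sum_(o' | o' != o0) f o' = 0.
  by move: s1; rewrite (bigD1 o0) //= fo0 -{2}[1]addr0 => /addrI.
move/eqP; rewrite psumr_eq0 => [/allP H|]; last by move=> *; exact: f0.
have := H o (mem_index_enum o); rewrite ne /= => /eqP fo'.
by move: fo; rewrite fo' ltxx.
Qed.

Definition vq (P : policy R) (s : pS P) (l : nat) : nat := pq s (inord l).

Lemma step_gst (P : policy R) (hP : adapted P) (s : pS P) i o :
  0 < pp s i o -> (o = None -> forall j, edgeD i j -> pq s j = 0%N) ->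
  gst (vq s) (val i) (omap val o) (vq (pnext s i o)).
Proof.
case: hP => _ [_ _ hS hN _] po hg.
case: o po hg => [j|] po hg /=.
  have [e p F] := hS _ _ _ po; split => //.
  - by rewrite /vq inord_val.
  - by move=> l l4; rewrite /vq F -val_eqE /= inordK.
split.
  move=> j j4 ej; rewrite /vq; apply: hg => //.
  by rewrite /edgeD inordK.
by move=> l l4; rewrite /vq hN // -val_eqE /= inordK.
Qed.

Lemma greedy_gst (P : policy R) (hP : adapted P) (hg : greedy P) (s : pS P) i o :
  0 < pp s i o -> gst (vq s) (val i) (omap val o) (vq (pnext s i o)).
Proof.
move=> po; apply: step_gst => // on j ej; rewrite on in po; apply/eqP; rewrite -leqn0 leqNgt; apply/negP => pj.
by move: po; rewrite (hg s i) ?ltxx //; exists j; rewrite ej pj.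
Qed.

Lemma plus_top rk (P : policy R) (hP : adapted P) (hrk : plus_order rk)
    (he : edge_priority rk P) (s : pS P) i o :
  0 < pp s i o ->
  (o = None /\ forall j, edgeD i j -> pq s j = 0%N) \/
  (exists j, o = Some j /\ forall k, edgeD i k -> (0 < pq s k)%N -> (rk i j <= rk i k)%N).
Proof.
case: hP => _ [h0 hs _ _ _]; case: he => _ [hsome hnone]; move=> po.
case: (pselect (exists j, edgeD i j && (0 < pq s j)%N)) => [[j1 Pj1]|no].
  case: (@arg_minnP _ j1 (fun j => edgeD i j && (0 < pq s j)%N) (fun j => rk i j) Pj1) => j0 /andP [ej0 pj0] minj0.
  right; exists j0; split; last by move=> k ek pk; apply: minj0; rewrite ek pk.
  apply: (only_one (f := pp s i)) => //; apply: hsome => // k ek pk kj0.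
  rewrite ltn_neqAle minj0 ?ek ?pk // andbT; apply/negP => /eqP E.
  case: hrk => [[_ inj] _]; have := inj _ _ _ _ ej0 ek E.
  rewrite eqxx /= => /orP [/eqP E'|/andP [/eqP ik /eqP ji]].
    by move: kj0; rewrite E' eqxx.
  by move: ej0; rewrite ji edge_irr.
left; have nz : forall j, edgeD i j -> pq s j = 0%N.
  move=> j ej; apply/eqP; rewrite -leqn0 leqNgt; apply/negP => pj; apply: no.
  by exists j; rewrite ej pj.
split => //; apply: (only_one (f := pp s i)) => //; exact: hnone.
Qed.

Lemma plus_pst rk (P : policy R) (hP : adapted P) (hrk : plus_order rk)
    (he : edge_priority rk P) (s : pS P) i o :
  0 < pp s i o -> pst (vq s) (val i) (omap val o) (vq (pnext s i o)).
Proof.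
move=> po; have top := plus_top hP hrk he po.
split.
- apply: step_gst => // on; case: top => [[]//|[j [oj _]]]; by rewrite on in oj.
- move=> i1 oj; case: top => [[on _]|[j [ojj mj]]]; first by rewrite on in oj.
  rewrite ojj /= in oj; case: oj => j3.
  move: mj; rewrite (_ : i = o1); last by apply: val_inj.
  rewrite (_ : j = o3); last by apply: val_inj.
  move=> mj; apply/eqP; rewrite -leqn0 leqNgt; apply/negP => p0.
  move: p0; rewrite /vq inordE0 => p0; have := mj o0 isT p0.
  case: hrk => [[sym _] hpl]; have := hpl o1 o3 isT isT isT.
  rewrite inordE0 inordE1 inordE2 inordE3 sym => -[h _].
  by rewrite leqNgt h.
- move=> i2 oj; case: top => [[on _]|[j [ojj mj]]]; first by rewrite on in oj.
  rewrite ojj /= in oj; case: oj => j0.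
  move: mj; rewrite (_ : i = o2); last by apply: val_inj.
  rewrite (_ : j = o0); last by apply: val_inj.
  move=> mj; apply/eqP; rewrite -leqn0 leqNgt; apply/negP => p3.
  move: p3; rewrite /vq inordE3 => p3; have := mj o3 isT p3.
  case: hrk => [[sym _] hpl]; have := hpl o2 o0 isT isT isT.
  rewrite inordE0 inordE1 inordE2 inordE3 => -[_ h].
  by rewrite leqNgt h.
Qed.

End Bridge.
Section Final.
Variable R : realType.

Definition nmx (i j : 'I_4) t (x : XT t) : nat :=
  (\sum_(k < t) (((x.1 k == i) && (x.2 k == Some j)) || ((x.1 k == j) && (x.2 k == Some i)) : nat))%N.

Lemma nmatch_xof d (O : measurableType d) (A : nat -> O -> 'I_4) (C : nat -> O -> option 'I_4) i j t w :
  nmatch A C i j t w = nmx i j (xof A C t w).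
Proof. by apply: eq_bigr => k _; rewrite /xof /= !ffunE. Qed.

Lemma nmx_Mc t (a : {ffun 'I_t -> 'I_4}) c i' j' : (i' < 4)%N -> (j' < 4)%N ->
  nmx (inord i') (inord j') (a, c) =
  Mc (fun k => val (extf a ord0 k)) (fun k => omap val (extf c None k)) i' j' t.
Proof.
have aux : forall (x : 'I_4) n, (n < 4)%N -> (x == inord n) = (val x == n).
  by move=> x n hn; rewrite -val_eqE /= inordK.
have oS : forall (T : eqType) (x y : T), (Some x == Some y) = (x == y) by [].
move=> hi hj; rewrite /Mc /nmx; apply: eq_bigr => k _; rewrite !extfE /ind /=.
rewrite !aux //.
by case: (c k) => [y|] //=; rewrite !oS !aux.
Qed.

Lemma path_ineq rk (Ph Pp : policy R) (hPh : adapted Ph) (hg : greedy Ph)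
  (hPp : adapted Pp) (hrk : plus_order rk) (he : edge_priority rk Pp)
  t (a : {ffun 'I_t -> 'I_4}) cg cp :
  0 < ppprod Ph (extf a ord0) cg -> 0 < ppprod Pp (extf a ord0) cp ->
  [/\ (nmx (inord 0) (inord 1) (a, cg) <= nmx (inord 0) (inord 1) (a, cp))%N,
      (nmx (inord 2) (inord 3) (a, cg) <= nmx (inord 2) (inord 3) (a, cp))%N,
      (nmx (inord 0) (inord 2) (a, cp) <= nmx (inord 0) (inord 2) (a, cg))%N &
      (nmx (inord 1) (inord 3) (a, cp) <= nmx (inord 1) (inord 3) (a, cg))%N].
Proof.
move=> pg pp_.
rewrite !nmx_Mc //.
have pos : forall (P : policy R), adapted P -> forall (c : {ffun 'I_t -> option 'I_4}), 0 < ppprod P (extf a ord0) c ->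
   forall k (kt : (k < t)%N),
   0 < pp (state_after P (extf a ord0) (extf c None) k) (extf a ord0 k) (extf c None k).
  move=> P hP c pc k kt.
  have nn : forall i : 'I_t, 0 <= pp (state_after P (extf a ord0) (extf c None) i) (extf a ord0 i) (extf c None i).
    by move=> i; case: hP => _ [h _ _ _ _]; apply: h.
  exact: (prod_pos_each nn pc (Ordinal kt)).
apply: (core (v1 := fun k => vq (state_after Ph (extf a ord0) (extf cg None) k))
             (v2 := fun k => vq (state_after Pp (extf a ord0) (extf cp None) k))).

- by move=> k _; exact: ltn_ord.
- move=> l _; rewrite /vq /=; case: hPh => h _; exact: (proj2 (h _) erefl).
- move=> l _; rewrite /vq /=. case: hPp => h _. exact: (proj2 (h _) erefl).
- move=> k kt; exact (greedy_gst hPh hg (pos _ hPh _ pg k kt)).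
- move=> k kt; exact (plus_pst hPp hrk he (pos _ hPp _ pp_ k kt)).
Qed.

Variables (la : 'I_4 -> R) (P : policy R) (d : measure_display) (Om : measurableType d)
  (Pr : probability Om R) (A : nat -> Om -> 'I_4) (C : nat -> Om -> option 'I_4).
Hypothesis hreal : realizes la P Pr A C.

Lemma meas_level i j t (g : nat -> bool) : measurable [set w | g (nmatch A C i j t w)].
Proof.
have -> : [set w | g (nmatch A C i j t w)] = [set w | (fun y => g (nmx i j y)) (xof A C t w)].
  by apply/seteqP; split => w /=; rewrite nmatch_xof.
exact: (m_pred hreal (fun y => g (nmx i j y))).
Qed.

Lemma Pr_level i j t (g : nat -> bool) :
  Pr [set w | g (nmatch A C i j t w)] = (\sum_(x : XT t | g (nmx i j x)) wgt la P x)%:E.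
Proof.
have -> : [set w | g (nmatch A C i j t w)] = [set w | (fun y => g (nmx i j y)) (xof A C t w)].
  by apply/seteqP; split => w /=; rewrite nmatch_xof.
exact: (Pr_pred hreal (fun y => g (nmx i j y))).
Qed.

End Final.
Section Main.
Variable R : realType.

Lemma rate_le (la : 'I_4 -> R) (hla : forall i, 0 <= arr_prob la i)
  (hS : 0 <= \sum_(l < 4) la l) (P1 P2 : policy R) (hP1 : adapted P1) (hP2 : adapted P2)
  d1 (O1 : measurableType d1) (Pr1 : probability O1 R) A1 C1 (h1 : realizes la P1 Pr1 A1 C1)
  d2 (O2 : measurableType d2) (Pr2 : probability O2 R) A2 C2 (h2 : realizes la P2 Pr2 A2 C2)
  i j m1 m2 (hm1 : matching_rate la Pr1 A1 C1 i j m1) (hm2 : matching_rate la Pr2 A2 C2 i j m2)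
  (path : forall t (a : {ffun 'I_t -> 'I_4}) c1 c2,
     0 < ppprod P1 (extf a ord0) c1 -> 0 < ppprod P2 (extf a ord0) c2 ->
     (nmx i j (a, c1) <= nmx i j (a, c2))%N) : m1 <= m2.
Proof.
set S := \sum_(l < 4) la l.
apply: (dom_limit (f1 := fun t w => S * (nmatch A1 C1 i j t w)%:R / t%:R)
                  (f2 := fun t w => S * (nmatch A2 C2 i j t w)%:R / t%:R) _ _ _ _ hm1 hm2).
- move=> t x; exact: (meas_level h1 i j t (fun n => x < S * n%:R / t%:R)).
- move=> t x; exact: (meas_level h2 i j t (fun n => x < S * n%:R / t%:R)).
- move=> t x; exact: (meas_level h2 i j t (fun n => S * n%:R / t%:R < x)).
move=> t x.
rewrite (Pr_level h1 i j t (fun n => x < S * n%:R / t%:R)).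
rewrite (Pr_level h2 i j t (fun n => x < S * n%:R / t%:R)) lee_fin.
case: hP1 => _ [hp1 hs1 _ _ _]; case: hP2 => _ [hp2 hs2 _ _ _].
apply: (@cmp_sum R la P1 P2 hs1 hs2 hp1 hp2 hla t (@nmx i j t) (@nmx i j t) (fun n => x < S * n%:R / t%:R)); last exact: path.
move=> m n mn /lt_le_trans; apply; apply: ler_wpM2r; first by rewrite invr_ge0.
by apply: ler_wpM2l => //; rewrite ler_nat.
Qed.

End Main.

Unset Implicit Arguments.

Theorem lemmaC1 (R : realType) (l1 l2b l3b l4 b : R)
  (hl1 : 0 < l1) (hl2 : 0 < l2b) (hl3 : 0 < l3b) (hl4 : 0 < l4) (hb : 0 < b)
  (h14 : l1 + l4 = 2^-1) (h23 : l2b + l3b = 2^-1)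
  (rk : 'I_4 -> 'I_4 -> nat) (hrk : plus_order rk)
  (Pp : policy R) (hPp : adapted Pp) (hPpe : edge_priority rk Pp)
  (Ph : policy R) (hPh : adapted Ph) (hPhg : greedy Ph)
  (d : measure_display) (Om : measurableType d) (Pr : probability Om R)
  (A : nat -> Om -> 'I_4) (C : nat -> Om -> option 'I_4)
  (hreal : realizes (lam l1 l2b l3b l4 b) Ph Pr A C)
  (d' : measure_display) (Om' : measurableType d') (Pr' : probability Om' R)
  (A' : nat -> Om' -> 'I_4) (C' : nat -> Om' -> option 'I_4)
  (hreal' : realizes (lam l1 l2b l3b l4 b) Pp Pr' A' C')
  (m12 m13 m24 m34 p12 p13 p24 p34 : R)
  (hm12 : matching_rate (lam l1 l2b l3b l4 b) Pr A C (inord 0) (inord 1) m12)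
  (hm13 : matching_rate (lam l1 l2b l3b l4 b) Pr A C (inord 0) (inord 2) m13)
  (hm24 : matching_rate (lam l1 l2b l3b l4 b) Pr A C (inord 1) (inord 3) m24)
  (hm34 : matching_rate (lam l1 l2b l3b l4 b) Pr A C (inord 2) (inord 3) m34)
  (hp12 : matching_rate (lam l1 l2b l3b l4 b) Pr' A' C' (inord 0) (inord 1) p12)
  (hp13 : matching_rate (lam l1 l2b l3b l4 b) Pr' A' C' (inord 0) (inord 2) p13)
  (hp24 : matching_rate (lam l1 l2b l3b l4 b) Pr' A' C' (inord 1) (inord 3) p24)
  (hp34 : matching_rate (lam l1 l2b l3b l4 b) Pr' A' C' (inord 2) (inord 3) p34) :
  [/\ m12 <= p12, m34 <= p34, p13 <= m13 & p24 <= m24].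
Proof.
set la := lam l1 l2b l3b l4 b.
have la0 : forall i, 0 <= la i.
  move=> i; rewrite /la /lam; case: (val i) => [|[|[|[|?]]]]; rewrite ?addr_ge0 ?ltW //.
have hS : 0 <= \sum_(l < 4) la l by apply: sumr_ge0 => l _.
have hla : forall i, 0 <= arr_prob la i.
  by move=> i; rewrite /arr_prob divr_ge0.
have P := path_ineq hPh hPhg hPp hrk hPpe.
split.
- apply: (rate_le hla hS hPh hPp hreal hreal' hm12 hp12) => t a c1 c2 q1 q2.
  by case: (P t a c1 c2 q1 q2).
- apply: (rate_le hla hS hPh hPp hreal hreal' hm34 hp34) => t a c1 c2 q1 q2.
  by case: (P t a c1 c2 q1 q2).
- apply: (rate_le hla hS hPp hPh hreal' hreal hp13 hm13) => t a c1 c2 q1 q2.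
  by case: (P t a c2 c1 q2 q1).
- apply: (rate_le hla hS hPp hPh hreal' hreal hp24 hm24) => t a c1 c2 q1 q2.
  by case: (P t a c2 c1 q2 q1).
Qed.
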